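(* Let $\mathcal{H}$ be a separable Hilbert space, let $\{f_n\}_{n=1}^\infty$ be a pseudo-Riesz sequence in $\mathcal{H}$, and let $\{g_n\}_{n=1}^\infty$ be a pseudo-codual sequence of $\{f_n\}$ which is a Bessel sequence. Then $\{g_n\}$ is a pseudo-Riesz sequence.
   Context: A Bessel sequence in $\mathcal{H}$ is a pseudo-Riesz sequence if it can be transformed into a Riesz sequence by removing a finite number of appropriate vectors from it. A sequence $\{g_n\}$ in $\mathcal{H}$ is a pseudo-codual sequence of the Bessel sequence $\{f_n\}$ if there is a finite-codimensional subspace $V\subseteq\ell^2(\mathbb{N})$ such that $\sum_{k=1}^\infty\langle g_n,f_k\rangle c_k=c_n$ for all $n\in\mathbb{N}$ and all $c=(c_k)\in V$. *)

(* Defs.v *)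
From Stdlib Require Import Reals List.
From Coquelicot Require Import Coquelicot.
Open Scope R_scope.

Notation CC := Complex.C.

Record HilbertSpace := {
  hvec :> ModuleSpace C_Ring;
  hinner : hvec -> hvec -> CC;
  hinner_add_l : forall x y z : hvec,
      hinner (plus x y) z = Cplus (hinner x z) (hinner y z);
  hinner_scal_l : forall (a : CC) (x y : hvec),
      hinner (scal a x) y = Cmult a (hinner x y);
  hinner_conj : forall x y : hvec, hinner y x = Cconj (hinner x y);
  hinner_pos : forall x : hvec, 0 <= Re (hinner x x);
  hinner_def : forall x : hvec, hinner x x = RtoC 0 -> x = zero;
  hcomplete : forall u : nat -> hvec,
      (forall eps, 0 < eps -> exists N, forall m n, (N <= m)%nat -> (N <= n)%nat ->
          sqrt (Re (hinner (minus (u m) (u n)) (minus (u m) (u n)))) < eps) ->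
      exists l : hvec, forall eps, 0 < eps -> exists N, forall n, (N <= n)%nat ->
          sqrt (Re (hinner (minus (u n) l) (minus (u n) l))) < eps;
  hseparable : exists d : nat -> hvec, forall (x : hvec) eps, 0 < eps ->
      exists n, sqrt (Re (hinner (minus x (d n)) (minus x (d n)))) < eps
}.

Arguments hinner {h}.

Definition hnorm {H : HilbertSpace} (x : H) : R := sqrt (Re (hinner x x)).

Definition cseries (a : nat -> CC) (l : CC) : Prop :=
  @is_series C_AbsRing C_NormedModule a l.

Definition Bessel {H : HilbertSpace} (f : nat -> H) : Prop :=
  exists B, 0 < B /\ forall x : H,
    ex_series (fun n => (Cmod (hinner x (f n)))^2) /\
    Series (fun n => (Cmod (hinner x (f n)))^2) <= B * (hnorm x)^2.

(* The family {f_n : n not in F} is a Riesz sequence: Riesz bounds for all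
   finitely supported coefficient sequences vanishing on F.
   (sum_n a N = a 0 + ... + a N.) *)
Definition Riesz_off {H : HilbertSpace} (f : nat -> H) (F : list nat) : Prop :=
  exists A B, 0 < A /\ 0 < B /\
    forall (N : nat) (c : nat -> CC), (forall n, In n F -> c n = RtoC 0) ->
      A * sum_n (fun n => (Cmod (c n))^2) N
        <= (hnorm (sum_n (fun n => scal (c n) (f n)) N))^2
      /\ (hnorm (sum_n (fun n => scal (c n) (f n)) N))^2
        <= B * sum_n (fun n => (Cmod (c n))^2) N.

Definition Riesz_sequence {H : HilbertSpace} (f : nat -> H) : Prop :=
  Riesz_off f nil.

Definition pseudo_Riesz {H : HilbertSpace} (f : nat -> H) : Prop :=
  Bessel f /\ exists F : list nat, Riesz_off f F.

Definition in_l2 (c : nat -> CC) : Prop :=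
  ex_series (fun k => (Cmod (c k))^2).

Definition finite_codim_subspace (V : (nat -> CC) -> Prop) : Prop :=
  (forall c, V c -> in_l2 c) /\
  V (fun _ => RtoC 0) /\
  (forall c d, V c -> V d -> V (fun k => Cplus (c k) (d k))) /\
  (forall (a : CC) c, V c -> V (fun k => Cmult a (c k))) /\
  (* l^2 = V + span(e_1,...,e_m) for some finite list of l^2 vectors *)
  exists e : list (nat -> CC), (forall v, In v e -> in_l2 v) /\
    forall c, in_l2 c -> exists (v : nat -> CC) (a : nat -> CC),
      V v /\ forall k, c k = Cplus (v k)
        (fold_right Cplus (RtoC 0)
           (map (fun i => Cmult (a i) (nth i e (fun _ => RtoC 0) k))
                (seq 0 (length e)))).

Definition pseudo_codual {H : HilbertSpace} (g f : nat -> H) : Prop :=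
  exists V, finite_codim_subspace V /\
    forall (n : nat) (c : nat -> CC), V c ->
      cseries (fun k => Cmult (hinner (g n) (f k)) (c k)) (c n).

(* Main.v *)
Require Import Defs.
From Stdlib Require Import Reals List Lia Lra Psatz Classical Arith ClassicalEpsilon FunctionalExtensionality.
From Coquelicot Require Import Coquelicot.
Open Scope R_scope.

Lemma plusC (x y : C) : plus x y = Cplus x y. Proof. reflexivity. Qed.
Lemma plusR (x y : R) : plus x y = Rplus x y. Proof. reflexivity. Qed.
Lemma multC (x y : C) : mult x y = Cmult x y. Proof. reflexivity. Qed.
Lemma scalC (x y : C) : scal x y = Cmult x y. Proof. reflexivity. Qed.
Ltac fp := repeat match goal with
  | |- context [@plus ?G ?x ?y] =>
      first [ change (@plus G x y) with (Cplus x y) | change (@plus G x y) with (Rplus x y) ]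
  end.

Ltac cf := fp; match goal with |- ?a = ?b => change (@eq C a b) end; field; auto.
Ltac cr := fp; match goal with |- ?a = ?b => change (@eq C a b) end; ring.

Ltac rr := fp; match goal with |- ?a = ?b => change (@eq R a b) end; ring.

Lemma zeroC : (zero : C) = RtoC 0. Proof. reflexivity. Qed.

Lemma sumR_le (a b : nat -> R) N : (forall k, (k <= N)%nat -> a k <= b k) ->
  sum_n a N <= sum_n b N.
Proof.
  induction N; intros Hab.
  - rewrite !sum_O. apply Hab; lia.
  - rewrite !sum_Sn, !plusR. apply Rplus_le_compat.
    + apply IHN. intros; apply Hab; lia.
    + apply Hab; lia.
Qed.

Lemma sumR_nonneg (a : nat -> R) N : (forall k, 0 <= a k) -> 0 <= sum_n a N.
Proof.
  intros Ha; induction N.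
  - rewrite sum_O; auto.
  - rewrite sum_Sn, plusR. specialize (Ha (S N)); lra.
Qed.

Lemma sumR_mono (a : nat -> R) N K : (forall k, 0 <= a k) -> (N <= K)%nat ->
  sum_n a N <= sum_n a K.
Proof.
  intros Ha HNK; induction HNK.
  - lra.
  - rewrite sum_Sn, plusR. specialize (Ha (S m)); lra.
Qed.

Lemma sumR_stop (a : nat -> R) N K : (forall k, (N < k)%nat -> a k = 0) -> (N <= K)%nat ->
  sum_n a K = sum_n a N.
Proof.
  intros Ha HNK; induction HNK.
  - reflexivity.
  - rewrite sum_Sn, plusR, IHHNK, Ha by lia. lra.
Qed.

Lemma sumR_trunc (a : nat -> R) N K : (forall k, 0 <= a k) -> (forall k, (N < k)%nat -> a k = 0) ->
  sum_n a K <= sum_n a N.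
Proof.
  intros H0 Ha. destruct (le_lt_dec K N).
  - apply sumR_mono; auto.
  - rewrite (sumR_stop a N K); auto; lra || lia.
Qed.

Lemma sumR_const_le (a : nat -> R) b N : (forall k, (k <= N)%nat -> a k <= b) ->
  sum_n a N <= INR (S N) * b.
Proof.
  intros H. rewrite <- sum_n_const. apply sumR_le. auto.
Qed.

Lemma sumC_RtoC (r : nat -> R) N : sum_n (fun n => RtoC (r n)) N = RtoC (sum_n r N).
Proof.
  induction N.
  - now rewrite !sum_O.
  - rewrite !sum_Sn, IHN, plusC, plusR, RtoC_plus. reflexivity.
Qed.

Lemma sumC_zero (F : nat -> C) N : (forall k, (k <= N)%nat -> F k = RtoC 0) -> sum_n F N = RtoC 0.
Proof.
  induction N; intros H.
  - rewrite sum_O; apply H; lia.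
  - rewrite sum_Sn, plusC, IHN. 2:{ intros; apply H; lia. }
    rewrite H by lia. apply injective_projections; simpl; lra.
Qed.

Lemma sumC_single (F : nat -> C) N j : (j <= N)%nat ->
  (forall k, (k <= N)%nat -> k <> j -> F k = RtoC 0) -> sum_n F N = F j.
Proof.
  induction N; intros Hj H.
  - assert (j = 0%nat) by lia; subst. apply sum_O.
  - rewrite sum_Sn, plusC. destruct (Nat.eq_dec j (S N)).
    + subst. rewrite sumC_zero. 2:{ intros; apply H; lia. }
      apply injective_projections; simpl; lra.
    + rewrite IHN by (lia || (intros; apply H; lia)). rewrite (H (S N)) by lia.
      apply injective_projections; simpl; lra.
Qed.

Lemma sumC_update (F G : nat -> C) u N p : (p <= N)%nat ->
  (forall k, (k <= N)%nat -> F k = if Nat.eqb k p then u else G k) ->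
  sum_n F N = Cplus (Cminus (sum_n G N) (G p)) u.
Proof.
  induction N; intros Hp H.
  - assert (p = 0%nat) by lia; subst. rewrite !sum_O, H by lia. simpl. cf.
  - rewrite !sum_Sn. fp. destruct (Nat.eq_dec p (S N)).
    + subst. rewrite (sum_n_ext_loc F G N).
      2:{ intros k Hk. rewrite H by lia. destruct (Nat.eqb_spec k (S N)); auto; lia. }
      rewrite H, Nat.eqb_refl by lia. fp. cf.
    + rewrite IHN by (lia || (intros; apply H; lia)). rewrite (H (S N)) by lia.
      destruct (Nat.eqb_spec (S N) p); [lia|]. cf.
Qed.

Lemma Cmod_sum (F : nat -> C) N : Cmod (sum_n F N) <= sum_n (fun n => Cmod (F n)) N.
Proof.
  induction N.
  - rewrite !sum_O; lra.
  - rewrite !sum_Sn, plusC, plusR. eapply Rle_trans; [apply Cmod_triangle|]. lra.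
Qed.

Lemma sum_quad (a b : nat -> R) t N :
  sum_n (fun n => (a n * t + b n)^2) N =
  t^2 * sum_n (fun n => a n ^2) N + 2 * t * sum_n (fun n => a n * b n) N + sum_n (fun n => b n ^2) N.
Proof.
  induction N.
  - rewrite !sum_O; rr.
  - rewrite !sum_Sn, IHN. rr.
Qed.

Lemma discr (A P B : R) : (forall t, 0 <= t^2 * A + 2 * t * P + B) -> 0 <= A -> P^2 <= A * B.
Proof.
  intros H HA. destruct (Req_dec A 0) as [HA0|HA0].
  - subst. destruct (Req_dec P 0) as [HP|HP].
    + subst. specialize (H 0). nra.
    + specialize (H (- (B+1) / (2 * P))). exfalso.
      replace ((- (B + 1) / (2 * P)) ^ 2 * 0 + 2 * (- (B + 1) / (2 * P)) * P + B) with (-1) in H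
        by (field; auto). lra.
  - specialize (H (- P / A)).
    replace ((- P / A) ^ 2 * A + 2 * (- P / A) * P + B) with (B - P^2 / A) in H by (field; auto).
    assert (0 < A) by lra.
    assert (P^2 / A <= B) by lra.
    apply Rmult_le_compat_l with (r := A) in H1; [|lra].
    replace (A * (P^2 / A)) with (P^2) in H1 by (field; lra). lra.
Qed.

Lemma CS_R (a b : nat -> R) N :
  (sum_n (fun n => a n * b n) N)^2 <= sum_n (fun n => a n ^2) N * sum_n (fun n => b n ^2) N.
Proof.
  apply discr.
  - intros t. rewrite <- sum_quad. apply sumR_nonneg. intros; apply pow2_ge_0.
  - apply sumR_nonneg. intros; apply pow2_ge_0.
Qed.

Lemma CS_C (u v : nat -> C) N :
  (Cmod (sum_n (fun n => Cmult (u n) (v n)) N))^2 <=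
  sum_n (fun n => (Cmod (u n))^2) N * sum_n (fun n => (Cmod (v n))^2) N.
Proof.
  eapply Rle_trans; [| apply (CS_R (fun n => Cmod (u n)) (fun n => Cmod (v n)))].
  apply pow_incr. split; [apply Cmod_ge_0|].
  eapply Rle_trans; [apply Cmod_sum|]. apply sumR_le. intros; rewrite Cmod_mult; lra.
Qed.

Lemma hinner_zero_l (H : HilbertSpace) (y : H) : hinner (zero : H) y = RtoC 0.
Proof.
  rewrite <- (scal_zero_r (RtoC 0) : scal (RtoC 0) (zero : H) = zero).
  rewrite hinner_scal_l. cr.
Qed.

Lemma hinner_sum_l (H : HilbertSpace) (c : nat -> C) (u : nat -> H) (y : H) N :
  hinner (sum_n (fun n => scal (c n) (u n)) N) y = sum_n (fun n => Cmult (c n) (hinner (u n) y)) N.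
Proof.
  induction N.
  - rewrite !sum_O. apply hinner_scal_l.
  - rewrite !sum_Sn, hinner_add_l, hinner_scal_l, IHN. reflexivity.
Qed.

Lemma hnorm_sq (H : HilbertSpace) (x : H) : hnorm x ^ 2 = Re (hinner x x).
Proof. unfold hnorm. rewrite <- Rsqr_pow2. apply Rsqr_sqrt, hinner_pos. Qed.

Lemma hnorm_sq_ge0 (H : HilbertSpace) (x : H) : 0 <= hnorm x ^ 2.
Proof. apply pow2_ge_0. Qed.

Lemma partial_le_Series (a : nat -> R) N : (forall n, 0 <= a n) -> ex_series a ->
  sum_n a N <= Series a.
Proof.
  intros H0 Hex.
  rewrite (Series_incr_n a (S N)) by (lia || auto). simpl pred.
  rewrite <- sum_n_Reals.
  assert (0 <= Series (fun k => a (S N + k)%nat)).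
  { assert (Hz: Series (fun k => 0 * a (S N + k)%nat) = 0).
    { rewrite Series_scal_l. ring. }
    rewrite <- Hz. apply Series_le.
    - intros; split; [lra|]. rewrite Rmult_0_l; auto.
    - apply (ex_series_incr_n a (S N)); auto. }
  lra.
Qed.

Lemma Bessel_partial (H : HilbertSpace) (g : nat -> H) B :
  (forall x : H, ex_series (fun n => (Cmod (hinner x (g n)))^2) /\
    Series (fun n => (Cmod (hinner x (g n)))^2) <= B * (hnorm x)^2) ->
  forall x N, sum_n (fun n => (Cmod (hinner x (g n)))^2) N <= B * (hnorm x)^2.
Proof.
  intros HB x N. destruct (HB x) as [Hex Hle].
  eapply Rle_trans; [apply partial_le_Series|]; auto.
  intros; apply pow2_ge_0.
Qed.

Lemma synth_upper (H : HilbertSpace) (g : nat -> H) B : 0 < B ->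
  (forall x : H, ex_series (fun n => (Cmod (hinner x (g n)))^2) /\
    Series (fun n => (Cmod (hinner x (g n)))^2) <= B * (hnorm x)^2) ->
  forall N c, (hnorm (sum_n (fun n => scal (c n) (g n)) N))^2 <=
    B * sum_n (fun n => (Cmod (c n))^2) N.
Proof.
  intros HB0 HB N c.
  set (x := sum_n (fun n => scal (c n) (g n)) N).
  set (X := hnorm x ^ 2).
  set (S := sum_n (fun n => (Cmod (c n))^2) N).
  assert (HX0 : 0 <= X) by apply pow2_ge_0.
  assert (HS0 : 0 <= S) by (apply sumR_nonneg; intros; apply pow2_ge_0).
  assert (HXle : X <= Cmod (hinner x x)).
  { unfold X. rewrite hnorm_sq. eapply Rle_trans; [apply Rle_abs| apply re_le_Cmod]. }
  assert (Hcs : (Cmod (hinner x x))^2 <= S * (B * X)).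
  { unfold x at 1. rewrite hinner_sum_l.
    eapply Rle_trans; [apply CS_C|]. apply Rmult_le_compat_l; auto.
    eapply Rle_trans; [|apply (Bessel_partial H g B HB x N)].
    apply sumR_le. intros k _. rewrite hinner_conj, Cmod_conj. lra. }
  assert (X^2 <= S * B * X).
  { eapply Rle_trans; [|rewrite Rmult_assoc; apply Hcs]. apply pow_incr; lra. }
  destruct (Req_dec X 0) as [E|E].
  - rewrite E. nra.
  - assert (0 < X) by lra.
    assert (X <= S * B) by (apply Rmult_le_reg_r with X; nra).
    nra.
Qed.

Lemma lim_bound (a : nat -> C) l M : cseries a l -> 0 <= M ->
  (forall K, (Cmod (sum_n a K))^2 <= M) -> (Cmod l)^2 <= M.
Proof.
  intros Hs HM HK.
  assert (Hl : is_lim_seq (fun K => Cmod (sum_n a K)) (Cmod l)).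
  { unfold is_lim_seq. eapply filterlim_comp; [apply Hs|]. apply (filterlim_norm (K:=C_AbsRing) (V:=C_NormedModule) l). }
  assert (Hc : Rbar_le (Cmod l) (sqrt M)).
  { eapply is_lim_seq_le; [| apply Hl | apply is_lim_seq_const].
    intros K. eapply Rle_trans; [apply Req_le; symmetry; apply (sqrt_pow2 (Cmod (sum_n a K))), Cmod_ge_0 |].
    apply sqrt_le_1_alt. apply HK. }
  simpl in Hc. rewrite <- (pow2_sqrt M) by auto. apply pow_incr. split; auto. apply Cmod_ge_0.
Qed.

Lemma star (H : HilbertSpace) (f g : nat -> H) Bf
  (HBf : forall x : H, ex_series (fun n => (Cmod (hinner x (f n)))^2) /\
    Series (fun n => (Cmod (hinner x (f n)))^2) <= Bf * (hnorm x)^2)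
  (HBf0 : 0 < Bf)
  (d : nat -> C) D
  (Hcod : forall n, cseries (fun k => Cmult (hinner (g n) (f k)) (d k)) (d n))
  (HD : forall K, sum_n (fun k => (Cmod (d k))^2) K <= D) (HD0 : 0 <= D) N c :
  (Cmod (sum_n (fun n => Cmult (c n) (d n)) N))^2 <=
    D * Bf * (hnorm (sum_n (fun n => scal (c n) (g n)) N))^2.
Proof.
  set (x := sum_n (fun n => scal (c n) (g n)) N).
  assert (Hs : cseries (fun k => sum_n (fun n => Cmult (c n) (Cmult (hinner (g n) (f k)) (d k))) N)
                 (sum_n (fun n => Cmult (c n) (d n)) N)).
  { clear x. induction N.
    - rewrite sum_O. eapply is_series_ext; [| apply (is_series_scal (K:=C_AbsRing) (V:=C_NormedModule) (c 0%nat)), Hcod].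
      intros k; simpl. rewrite sum_O. reflexivity.
    - rewrite sum_Sn. eapply is_series_ext; [| apply (is_series_plus (K:=C_AbsRing) (V:=C_NormedModule) _ _ _ _ IHN (is_series_scal (K:=C_AbsRing) (V:=C_NormedModule) (c (S N)) _ _ (Hcod (S N))))].
      intros k; simpl. rewrite sum_Sn. reflexivity. }
  assert (Hs' : cseries (fun k => Cmult (hinner x (f k)) (d k)) (sum_n (fun n => Cmult (c n) (d n)) N)).
  { eapply is_series_ext; [| apply Hs]. intros k. simpl.
    unfold x. rewrite hinner_sum_l.
    apply eq_trans with (2 := sum_n_mult_r (K:=C_Ring) _ _ _). apply sum_n_ext. intros n. apply eq_trans with (2 := eq_sym (multC _ _)). cr. }
  apply (lim_bound _ _ _ Hs').
  - apply Rmult_le_pos; [nra| apply pow2_ge_0].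
  - intros K. eapply Rle_trans; [apply CS_C|].
    rewrite Rmult_comm, Rmult_assoc.
    apply Rmult_le_compat; [apply sumR_nonneg; intros; apply pow2_ge_0 | apply sumR_nonneg; intros; apply pow2_ge_0 | apply HD |].
    apply Bessel_partial; auto.
Qed.

Lemma sumC_lin (u v : nat -> C) w N :
  sum_n (fun j => Cminus (u j) (Cmult (v j) w)) N = Cminus (sum_n u N) (Cmult (sum_n v N) w).
Proof.
  induction N.
  - rewrite !sum_O. reflexivity.
  - rewrite !sum_Sn, IHN. cr.
Qed.

Lemma LA : forall m (a : nat -> nat -> C), exists b : nat -> C,
  (exists j, (j <= m)%nat /\ b j <> RtoC 0) /\
  forall i, (i < m)%nat -> sum_n (fun j => Cmult (b j) (a j i)) m = RtoC 0.
Proof.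
  induction m; intros a.
  - exists (fun _ => RtoC 1). split.
    + exists 0%nat. split; [lia|]. intros E. apply (f_equal fst) in E. simpl in E. lra.
    + intros; lia.
  - destruct (classic (exists p, (p <= S m)%nat /\ a p m <> RtoC 0)) as [[p [Hp Hr]] | Hno].
    + set (r := a p m) in *.
      set (sg := fun j => if Nat.eqb j p then S m else j).
      set (a' := fun j i => Cminus (a (sg j) i) (Cmult (Cdiv (a (sg j) m) r) (a p i))).
      destruct (IHm a') as [g [[j0 [Hj0 Hg]] Hz]].
      set (t := sum_n (fun j => Cmult (g j) (a (sg j) m)) m).
      set (b := fun k => if Nat.eqb k p then Copp (Cdiv t r) else if Nat.eqb k (S m) then g p else g k).
      assert (Key : forall i, sum_n (fun k => Cmult (b k) (a k i)) (S m) =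
                             sum_n (fun j => Cmult (g j) (a' j i)) m).
      { intros i.
        rewrite (sum_n_ext (fun j => Cmult (g j) (a' j i)) (fun j => Cminus (Cmult (g j) (a (sg j) i)) (Cmult (Cmult (g j) (a (sg j) m)) (Cdiv (a p i) r)))).
        2:{ intros j. unfold a'. cf. }
        rewrite sumC_lin. fold t.
        rewrite sum_Sn.
        destruct (Nat.eq_dec p (S m)) as [E|E].
        - rewrite (sum_n_ext_loc (fun k => Cmult (b k) (a k i)) (fun j => Cmult (g j) (a (sg j) i))).
          2:{ intros k Hk. unfold b, sg. destruct (Nat.eqb_spec k p); [lia|].
              destruct (Nat.eqb_spec k (S m)); [lia|]. reflexivity. }
          unfold b. rewrite <- E, Nat.eqb_refl. fold r. cf.
        - rewrite (sumC_update (fun k => Cmult (b k) (a k i)) (fun k => Cmult (g k) (a k i))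
                     (Cmult (Copp (Cdiv t r)) (a p i)) m p); [| lia |].
          2:{ intros k Hk. unfold b. destruct (Nat.eqb_spec k p); [subst; reflexivity|].
              destruct (Nat.eqb_spec k (S m)); [lia|]. reflexivity. }
          rewrite (sumC_update (fun j => Cmult (g j) (a (sg j) i)) (fun k => Cmult (g k) (a k i))
                     (Cmult (g p) (a (S m) i)) m p); [| lia |].
          2:{ intros k Hk. unfold sg. destruct (Nat.eqb_spec k p); [subst; reflexivity|]. reflexivity. }
          unfold b. destruct (Nat.eqb_spec (S m) p); [lia|]. rewrite Nat.eqb_refl. cf. }
      exists b. split.
      * destruct (Nat.eq_dec p (S m)) as [E|E].
        -- exists j0. split; [lia|]. unfold b. destruct (Nat.eqb_spec j0 p); [lia|].
           destruct (Nat.eqb_spec j0 (S m)); [lia|]. auto.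
        -- destruct (Nat.eq_dec j0 p) as [E2|E2].
           ++ exists (S m). split; [lia|]. unfold b. destruct (Nat.eqb_spec (S m) p); [lia|].
              rewrite Nat.eqb_refl. subst; auto.
           ++ exists j0. split; [lia|]. unfold b. destruct (Nat.eqb_spec j0 p); [lia|].
              destruct (Nat.eqb_spec j0 (S m)); [lia|]. auto.
      * intros i Hi. rewrite Key. destruct (Nat.eq_dec i m) as [Ei|Ei].
        -- subst i. apply sumC_zero. intros k _. unfold a'. fold r. cf.
        -- apply Hz. lia.
    + destruct (IHm a) as [g [[j0 [Hj0 Hg]] Hz]].
      exists (fun j => if Nat.leb j m then g j else RtoC 0). split.
      * exists j0. split; [lia|]. destruct (Nat.leb_spec j0 m); [auto|lia].
      * intros i Hi. rewrite sum_Sn.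
        rewrite (sum_n_ext_loc _ (fun j => Cmult (g j) (a j i))).
        2:{ intros k Hk. destruct (Nat.leb_spec k m); [reflexivity|lia]. }
        destruct (Nat.leb_spec (S m) m); [lia|].
        destruct (Nat.eq_dec i m) as [Ei|Ei].
        -- subst i. rewrite sumC_zero.
           ++ cf.
           ++ intros k Hk. assert (a k m = RtoC 0).
              { apply NNPP. intros Hne. apply Hno. exists k. split; [lia|auto]. }
              rewrite H0. cf.
        -- rewrite Hz by lia. cf.
Qed.

Lemma choice_nat {X : Type} (P : nat -> X -> Prop) :
  (forall n, exists x, P n x) -> exists F : nat -> X, forall n, P n (F n).
Proof.
  intros H. exists (fun n => proj1_sig (constructive_indefinite_description _ (H n))).
  intros n. apply proj2_sig.
Qed.

Fixpoint mseq (Nf : nat -> nat) (j : nat) : nat :=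
  match j with 0 => 0%nat | S j => S (Nf (mseq Nf j) + mseq Nf j) end.

Lemma mseq_mono Nf i j : (i < j)%nat -> (mseq Nf (S i) <= mseq Nf j)%nat.
Proof.
  induction j; intros Hij; [lia|].
  destruct (Nat.eq_dec i j); [subst; lia|].
  assert (mseq Nf (S i) <= mseq Nf j)%nat by (apply IHj; lia).
  change (mseq Nf (S j)) with (S (Nf (mseq Nf j) + mseq Nf j)). lia.
Qed.

Lemma zero_series : ex_series (fun _ : nat => 0).
Proof.
  assert (H : ex_series (fun n => 0 ^ n)).
  { eexists. apply is_series_geom. rewrite Rabs_R0; lra. }
  apply ex_series_incr_1 in H. eapply ex_series_ext; [|apply H].
  intros n; simpl; ring.
Qed.

Lemma finsupp_l2 (a : nat -> C) N : (forall n, (N < n)%nat -> a n = RtoC 0) -> in_l2 a.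
Proof.
  intros Ha. unfold in_l2. apply (ex_series_incr_n _ (S N)).
  eapply ex_series_ext; [|apply zero_series].
  intros n; simpl. rewrite Ha by lia. rewrite Cmod_0. ring.
Qed.

Lemma sumC_mult_r (u : nat -> C) w N :
  sum_n (fun j => Cmult (u j) w) N = Cmult (sum_n u N) w.
Proof. induction N; [rewrite !sum_O; reflexivity| rewrite !sum_Sn, IHN; cr]. Qed.

Lemma sumC_mult_l (u : nat -> C) w N :
  sum_n (fun j => Cmult w (u j)) N = Cmult w (sum_n u N).
Proof. induction N; [rewrite !sum_O; reflexivity| rewrite !sum_Sn, IHN; cr]. Qed.

Lemma fold_lin (b : nat -> C) (F : nat -> nat -> C) N (l : list nat) :
  sum_n (fun j => Cmult (b j) (fold_right Cplus (RtoC 0) (map (F j) l))) N =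
  fold_right Cplus (RtoC 0) (map (fun i => sum_n (fun j => Cmult (b j) (F j i)) N) l).
Proof.
  induction l as [|x l IH]; cbn [map fold_right].
  - apply sumC_zero. intros; cr.
  - rewrite <- IH. apply eq_trans with (2 := sum_n_plus (fun j => Cmult (b j) (F j x)) (fun j => Cmult (b j) (fold_right Cplus (RtoC 0) (map (F j) l))) N). apply sum_n_ext. intros; cr.
Qed.

Lemma fold_zero (G : nat -> C) (l : list nat) :
  (forall i, In i l -> G i = RtoC 0) -> fold_right Cplus (RtoC 0) (map G l) = RtoC 0.
Proof.
  induction l as [|x l IH]; cbn [map fold_right]; intros H; [reflexivity|].
  rewrite IH by (intros; apply H; right; auto). rewrite H by (left; auto). cr.
Qed.

Lemma sumR_zero (F : nat -> R) N : (forall k, (k <= N)%nat -> F k = 0) -> sum_n F N = 0.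
Proof.
  induction N; intros H.
  - rewrite sum_O; apply H; lia.
  - rewrite sum_Sn, IHN by (intros; apply H; lia). rewrite H by lia. rr.
Qed.

Lemma sumR_single (F : nat -> R) N j : (j <= N)%nat ->
  (forall k, (k <= N)%nat -> k <> j -> F k = 0) -> sum_n F N = F j.
Proof.
  induction N; intros Hj H.
  - assert (j = 0%nat) by lia; subst. apply sum_O.
  - rewrite sum_Sn. destruct (Nat.eq_dec j (S N)).
    + subst. rewrite sumR_zero by (intros; apply H; lia). rr.
    + rewrite IHN by (lia || (intros; apply H; lia)). rewrite (H (S N)) by lia. rr.
Qed.

Lemma V_lincomb (V : (nat -> CC) -> Prop)
  (Vadd : forall c d, V c -> V d -> V (fun k => Cplus (c k) (d k)))
  (Vscal : forall (a : CC) c, V c -> V (fun k => Cmult a (c k)))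
  (w : nat -> nat -> C) (b : nat -> C) (Hw : forall j, V (w j)) N :
  V (fun k => sum_n (fun j => Cmult (b j) (w j k)) N).
Proof.
  induction N.
  - replace (fun k => sum_n (fun j => Cmult (b j) (w j k)) 0) with (fun k => Cmult (b 0%nat) (w 0%nat k)).
    + apply Vscal, Hw.
    + apply functional_extensionality; intros k. rewrite sum_O. reflexivity.
  - replace (fun k => sum_n (fun j => Cmult (b j) (w j k)) (S N)) with
      (fun k => Cplus (sum_n (fun j => Cmult (b j) (w j k)) N) (Cmult (b (S N)) (w (S N) k))).
    + apply Vadd; auto.
    + apply functional_extensionality; intros k. rewrite sum_Sn. reflexivity.
Qed.

Definition badblock (H : HilbertSpace) (g : nat -> H) (A : R) (M : nat) (cN : (nat -> C) * nat) : Prop :=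
  (forall n, fst cN n <> RtoC 0 -> (M <= n <= snd cN)%nat) /\
  0 < sum_n (fun n => (Cmod (fst cN n))^2) (snd cN) /\
  (hnorm (sum_n (fun n => scal (fst cN n) (g n)) (snd cN)))^2 < A * sum_n (fun n => (Cmod (fst cN n))^2) (snd cN).

Lemma get_bad (H : HilbertSpace) (g : nat -> H) A Bg M : 0 < A -> 0 < Bg ->
  (forall N c, (hnorm (sum_n (fun n => scal (c n) (g n)) N))^2 <= Bg * sum_n (fun n => (Cmod (c n))^2) N) ->
  ~ Riesz_off g (seq 0 M) -> exists cN, badblock H g A M cN.
Proof.
  intros HA HBg Hup Hnot. apply NNPP; intro Hno. apply Hnot.
  exists A, Bg. split; auto; split; auto.
  intros N c Hc. split; [| apply Hup].
  apply Rnot_lt_le; intro Hlt. apply Hno.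
  set (c' := fun n => if Nat.leb n N then c n else RtoC 0).
  assert (E1 : sum_n (fun n => (Cmod (c' n))^2) N = sum_n (fun n => (Cmod (c n))^2) N).
  { apply sum_n_ext_loc. intros n Hn. unfold c'. destruct (Nat.leb_spec n N); [reflexivity|lia]. }
  assert (E2 : sum_n (fun n => scal (c' n) (g n)) N = sum_n (fun n => scal (c n) (g n)) N).
  { apply sum_n_ext_loc. intros n Hn. unfold c'. destruct (Nat.leb_spec n N); [reflexivity|lia]. }
  exists (c', N). unfold badblock; cbn [fst snd]. rewrite E1, E2. split; [|split; auto].
  - intros n Hn. unfold c' in Hn. destruct (Nat.leb_spec n N); [|congruence].
    split; auto. destruct (le_lt_dec M n); auto.
    exfalso. apply Hn, Hc. apply in_seq. lia.
  - pose proof (pow2_ge_0 (hnorm (sum_n (fun n => scal (c n) (g n)) N))).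
    destruct (Rle_lt_dec (sum_n (fun n => (Cmod (c n))^2) N) 0); auto.
    nra.
Qed.

Lemma sumC_plus (u v : nat -> C) N :
  sum_n (fun j => Cplus (u j) (v j)) N = Cplus (sum_n u N) (sum_n v N).
Proof. exact (sum_n_plus u v N). Qed.

Lemma Cconj0 : Cconj (RtoC 0) = RtoC 0.
Proof. apply injective_projections; simpl; ring. Qed.

Theorem mainTheorem4 (H : HilbertSpace) (f g : nat -> H) :
  pseudo_Riesz f -> pseudo_codual g f -> Bessel g -> pseudo_Riesz g.
Proof.
  intros [[Bf [HBf0 HBf]] _] [V [[Vl2 [V0 [Vadd [Vscal [e [el2 dec]]]]]] cod]] HBg.
  split; [exact HBg|].
  destruct HBg as [Bg [HBg0 HBg]].
  set (m := length e).
  assert (Hm : 0 < INR (S m)) by (apply lt_0_INR; lia).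
  set (A := / (2 * INR (S m) * Bf)).
  assert (HA : 0 < A) by (unfold A; apply Rinv_0_lt_compat; nra).
  assert (Hup := synth_upper H g Bg HBg0 HBg).
  apply NNPP; intro Hnot.
  assert (Hbad : forall M, exists cN, badblock H g A M cN).
  { intros M. apply get_bad with Bg; auto. intro HR. apply Hnot. eauto. }
  destruct (choice_nat _ Hbad) as [CN HCN].
  set (Nf := fun M => snd (CN M)).
  set (blk := fun j => fst (CN (mseq Nf j))).
  set (Nj := fun j => Nf (mseq Nf j)).
  assert (Hsupp : forall j n, blk j n <> RtoC 0 -> (mseq Nf j <= n <= Nj j)%nat).
  { intros j n. apply (HCN (mseq Nf j)). }
  assert (Hs : forall j, 0 < sum_n (fun n => (Cmod (blk j n))^2) (Nj j)).
  { intros j. apply (HCN (mseq Nf j)). }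
  assert (HX : forall j, (hnorm (sum_n (fun n => scal (blk j n) (g n)) (Nj j)))^2 <
                         A * sum_n (fun n => (Cmod (blk j n))^2) (Nj j)).
  { intros j. apply (HCN (mseq Nf j)). }
  assert (Hout : forall j n, (Nj j < n)%nat -> blk j n = RtoC 0).
  { intros j n Hn. apply NNPP; intro Hne. apply Hsupp in Hne. lia. }
  assert (Hdisj : forall i j n, i <> j -> blk i n = RtoC 0 \/ blk j n = RtoC 0).
  { intros i j n Hij. apply NNPP; intro Hc. apply not_or_and in Hc. destruct Hc as [Hi Hj].
    apply Hsupp in Hi. apply Hsupp in Hj.
    assert (Hi' : mseq Nf (S i) = S (Nj i + mseq Nf i)) by reflexivity.
    assert (Hj' : mseq Nf (S j) = S (Nj j + mseq Nf j)) by reflexivity.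
    destruct (Nat.lt_total i j) as [Hlt|[Heq|Hlt]]; [|lia|].
    - pose proof (mseq_mono Nf i j Hlt). lia.
    - pose proof (mseq_mono Nf j i Hlt). lia. }
  set (h := fun j n => Cconj (blk j n)).
  assert (Hhl2 : forall j, in_l2 (h j)).
  { intros j. apply finsupp_l2 with (Nj j). intros n Hn. unfold h. rewrite Hout by auto.
    apply injective_projections; simpl; lra. }
  assert (Hdec : forall j, exists va : (nat -> C) * (nat -> C), V (fst va) /\
            forall k, h j k = Cplus (fst va k) (fold_right Cplus (RtoC 0)
              (map (fun i => Cmult (snd va i) (nth i e (fun _ => RtoC 0) k)) (seq 0 (length e))))).
  { intros j. destruct (dec (h j) (Hhl2 j)) as [v [a [Hv Hk]]]. exists (v, a). simpl. auto. }
  destruct (choice_nat _ Hdec) as [VA HVA].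
  destruct (LA m (fun j i => snd (VA j) i)) as [b [[j0 [Hj0 Hb0]] Hbz]].
  set (y := fun k => sum_n (fun j => Cmult (b j) (h j k)) m).
  assert (Vy : V y).
  { replace y with (fun k => sum_n (fun j => Cmult (b j) (fst (VA j) k)) m).
    - apply V_lincomb; auto. intros j; apply HVA.
    - apply functional_extensionality; intros k. unfold y.
      rewrite (sum_n_ext (fun j => Cmult (b j) (h j k))
        (fun j => Cplus (Cmult (b j) (fst (VA j) k))
           (Cmult (b j) (fold_right Cplus (RtoC 0)
              (map (fun i => Cmult (snd (VA j) i) (nth i e (fun _ => RtoC 0) k)) (seq 0 (length e))))))).
      2:{ intros j. destruct (HVA j) as [_ Hk]. rewrite Hk. cr. }
      rewrite sumC_plus. rewrite fold_lin. rewrite fold_zero.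
      + rewrite Cplus_0_r. reflexivity.
      + intros i Hi. apply in_seq in Hi.
        rewrite (sum_n_ext _ (fun j => Cmult (Cmult (b j) (snd (VA j) i)) (nth i e (fun _ => RtoC 0) k))).
        2:{ intros; cr. }
        rewrite sumC_mult_r. rewrite Hbz by (unfold m; lia). cr. }
  assert (Hcody : forall n, cseries (fun k => Cmult (hinner (g n) (f k)) (y k)) (y n)).
  { intros n. apply cod. exact Vy. }
  set (s := fun j => sum_n (fun n => (Cmod (blk j n))^2) (Nj j)).
  set (Y := sum_n (fun j => (Cmod (b j))^2 * s j) m).
  assert (HY0 : 0 <= Y).
  { apply sumR_nonneg. intros j. apply Rmult_le_pos; [apply pow2_ge_0| apply Rlt_le, Hs]. }
  assert (Hpt : forall k, (Cmod (y k))^2 = sum_n (fun j => (Cmod (b j))^2 * (Cmod (blk j k))^2) m).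
  { intros k. destruct (classic (exists i, (i <= m)%nat /\ blk i k <> RtoC 0)) as [[i [Hi Hne]]|Hno].
    - unfold y. rewrite (sumC_single _ m i Hi).
      2:{ intros j Hj Hji. unfold h. destruct (Hdisj j i k Hji) as [E|E]; [rewrite E, Cconj0; cr | congruence]. }
      rewrite (sumR_single _ m i Hi).
      2:{ intros j Hj Hji. destruct (Hdisj j i k Hji) as [E|E]; [rewrite E, Cmod_0; ring| congruence]. }
      unfold h. rewrite Cmod_mult, Cmod_conj. ring.
    - assert (Hz : forall j, (j <= m)%nat -> blk j k = RtoC 0).
      { intros j Hj. apply NNPP; intro; apply Hno; eauto. }
      unfold y. rewrite sumC_zero. 2:{ intros j Hj. unfold h. rewrite Hz, Cconj0 by auto. cr. }
      rewrite sumR_zero. 2:{ intros j Hj. rewrite Hz by auto. rewrite Cmod_0. ring. }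
      rewrite Cmod_0. ring. }
  assert (HD : forall K, sum_n (fun k => (Cmod (y k))^2) K <= Y).
  { intros K.
    rewrite (sum_n_ext (fun k => (Cmod (y k))^2) (fun k => sum_n (fun j => (Cmod (b j))^2 * (Cmod (blk j k))^2) m) K Hpt).
    apply Rle_trans with (sum_n (fun j => sum_n (fun k => (Cmod (b j))^2 * (Cmod (blk j k))^2) K) m).
    { right. symmetry. exact (sum_n_switch (fun j k => (Cmod (b j))^2 * (Cmod (blk j k))^2) m K). }
    apply sumR_le. intros j _.
    apply Rle_trans with ((Cmod (b j))^2 * sum_n (fun k => (Cmod (blk j k))^2) K).
    { right. exact (sum_n_mult_l (K:=R_Ring) _ _ _). }
    apply Rmult_le_compat_l; [apply pow2_ge_0|].
    apply sumR_trunc. { intros; apply pow2_ge_0. }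
    intros k Hk. rewrite Hout by auto. rewrite Cmod_0. ring. }
  assert (Hblk : forall j, (j <= m)%nat -> (Cmod (b j))^2 * s j <= Y * Bf * A).
  { intros j Hj.
    pose proof (star H f g Bf HBf HBf0 y Y Hcody HD HY0 (Nj j) (blk j)) as Hst.
    assert (Esum : sum_n (fun n => Cmult (blk j n) (y n)) (Nj j) = Cmult (b j) (RtoC (s j))).
    { rewrite (sum_n_ext _ (fun n => Cmult (b j) (RtoC ((Cmod (blk j n))^2)))).
      - rewrite sumC_mult_l, sumC_RtoC. reflexivity.
      - intros n. unfold y. rewrite <- sumC_mult_l.
        rewrite (sumC_single _ m j Hj).
        + unfold h. rewrite Cmod2_conj. cr.
        + intros i Hi Hij. unfold h. destruct (Hdisj i j n Hij) as [E|E]; rewrite E; [rewrite Cconj0|]; cr. }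
    rewrite Esum, Cmod_mult, Cmod_R, Rabs_pos_eq in Hst by (apply Rlt_le, Hs).
    pose proof (HX j) as HXj. pose proof (Hs j) as Hsj.
    change (sum_n (fun n => (Cmod (blk j n))^2) (Nj j)) with (s j) in HXj, Hsj.
    set (X := hnorm (sum_n (fun n => scal (blk j n) (g n)) (Nj j)) ^ 2) in *.
    assert (Y * Bf * X <= Y * Bf * (A * s j)).
    { apply Rmult_le_compat_l; [nra| lra]. }
    apply Rmult_le_reg_l with (s j); auto.
    replace (s j * (Cmod (b j) ^ 2 * s j)) with ((Cmod (b j) * s j) ^ 2) by ring.
    replace (s j * (Y * Bf * A)) with (Y * Bf * (A * s j)) by ring. lra. }
  assert (Hsum : Y <= INR (S m) * (Y * Bf * A)) by (apply sumR_const_le; auto).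
  assert (Ehalf : INR (S m) * (Y * Bf * A) = Y / 2) by (unfold A; field; split; lra).
  assert (HY : Y = 0) by lra.
  specialize (Hblk j0 Hj0). rewrite HY in Hblk.
  apply Cmod_gt_0 in Hb0. pose proof (Hs j0).
  change (sum_n (fun n => (Cmod (blk j0 n))^2) (Nj j0)) with (s j0) in H0.
  assert (Hp : 0 < Cmod (b j0) ^ 2 * s j0) by (apply Rmult_lt_0_compat; [apply pow_lt; auto | auto]).
  assert (E0 : 0 * Bf * A = 0) by ring. rewrite E0 in Hblk.
  apply (Rlt_irrefl 0). eapply Rlt_le_trans; [apply Hp| apply Hblk].
Qed.
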